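(* For each slim semimodular lattice $L$ there exist a finite cyclic group $G$ and composition series $\vec H$ and $\vec K$ of $G$ such that $L$ is isomorphic to the dual of the lattice $(\mathrm{CSL}(\vec H,\vec K);\subseteq)$. Conversely, for every group $G$ of finite composition length and any composition series $\vec H$ and $\vec K$ of $G$, the dual of $(\mathrm{CSL}(\vec H,\vec K);\subseteq)$ is a slim semimodular lattice.
   Context: For composition series $\vec H\colon\{1\}=H_0\triangleleft\dots\triangleleft H_n=G$ and $\vec K\colon\{1\}=K_0\triangleleft\dots\triangleleft K_n=G$ of a group $G$, $\mathrm{CSL}(\vec H,\vec K)=\{H_i\cap K_j:0\le i,j\le n\}$ ordered by set inclusion; it is a lattice. A finite lattice is slim if its join-irreducible elements (including $0$) contain no three-element antichain; it is semimodular if $a\prec b$ implies $a\vee c\preceq b\vee c$. *)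

(* Defs.v *)
From Stdlib Require Import List.
Set Implicit Arguments.

Record group := Group {
  gcar :> Type;
  gmul : gcar -> gcar -> gcar;
  gone : gcar;
  ginv : gcar -> gcar;
  gmulA : forall x y z, gmul x (gmul y z) = gmul (gmul x y) z;
  gmul1 : forall x, gmul gone x = x;
  gmulV : forall x, gmul (ginv x) x = gone
}.

Definition subgroup {G : group} (A : G -> Prop) : Prop :=
  A (gone G) /\ (forall x y, A x -> A y -> A (gmul G x y)) /\
  (forall x, A x -> A (ginv G x)).

Definition subset {G : group} (A B : G -> Prop) : Prop := forall x, A x -> B x.

Definition same_set {G : group} (A B : G -> Prop) : Prop := forall x, A x <-> B x.

Definition normal_in {G : group} (A B : G -> Prop) : Prop :=
  forall x y, B y -> A x -> A (gmul G (ginv G y) (gmul G x y)).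

(* B/A is a simple group, for A normal in B: A is a maximal proper normal
   subgroup of B (correspondence theorem). *)
Definition simple_quotient {G : group} (B A : G -> Prop) : Prop :=
  (exists x, B x /\ ~ A x) /\
  forall N : G -> Prop, subgroup N -> subset A N -> subset N B -> normal_in N B ->
    same_set N A \/ same_set N B.

Definition composition_series {G : group} (n : nat) (H : nat -> G -> Prop) : Prop :=
  (forall x, H 0 x <-> x = gone G) /\
  (forall x, H n x) /\
  (forall i, i <= n -> subgroup (H i)) /\
  (forall i, i < n ->
     subset (H i) (H (S i)) /\ normal_in (H i) (H (S i)) /\
     simple_quotient (H (S i)) (H i)).

Definition CSL {G : group} (n : nat) (H K : nat -> G -> Prop) : Type :=
  { A : G -> Prop | exists i j, i <= n /\ j <= n /\ A = (fun x => H i x /\ K j x) }.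

Definition CSL_dual_le {G : group} (n : nat) (H K : nat -> G -> Prop)
  (A B : CSL n H K) : Prop := forall x, proj1_sig B x -> proj1_sig A x.

Definition finite_type (T : Type) : Prop := exists s : list T, forall x, In x s.

Fixpoint gpow {G : group} (g : G) (k : nat) : G :=
  match k with O => gone G | S k' => gmul G g (gpow g k') end.

Definition cyclic_group (G : group) : Prop :=
  exists g : G, forall x : G, exists k : nat, x = gpow g k \/ x = ginv G (gpow g k).

Section Poset.
Variables (X : Type) (le : X -> X -> Prop).

Definition partial_order : Prop :=
  (forall x, le x x) /\ (forall x y, le x y -> le y x -> x = y) /\
  (forall x y z, le x y -> le y z -> le x z).

Definition is_join (x y j : X) : Prop :=
  le x j /\ le y j /\ forall u, le x u -> le y u -> le j u.

Definition is_meet (x y m : X) : Prop :=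
  le m x /\ le m y /\ forall u, le u x -> le u y -> le u m.

Definition finite_lattice : Prop :=
  partial_order /\ finite_type X /\ inhabited X /\
  (forall x y, exists j, is_join x y j) /\ (forall x y, exists m, is_meet x y m).

Definition lt (x y : X) : Prop := le x y /\ x <> y.

Definition covers (a b : X) : Prop :=
  lt a b /\ forall z, le a z -> le z b -> z = a \/ z = b.

(* join-irreducible; note that 0 satisfies this, as in the paper *)
Definition join_irreducible (x : X) : Prop :=
  forall y z, is_join y z x -> x = y \/ x = z.

Definition incomparable (x y : X) : Prop := ~ le x y /\ ~ le y x.

Definition slim : Prop :=
  ~ exists a b c, join_irreducible a /\ join_irreducible b /\ join_irreducible c /\
      incomparable a b /\ incomparable a c /\ incomparable b c.

Definition semimodular : Prop :=
  forall a b c ac bc, covers a b -> is_join a c ac -> is_join b c bc ->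
    ac = bc \/ covers ac bc.

Definition slim_semimodular_lattice : Prop :=
  finite_lattice /\ slim /\ semimodular.
End Poset.

Definition order_isomorphic (X Y : Type) (leX : X -> X -> Prop) (leY : Y -> Y -> Prop) : Prop :=
  exists (f : X -> Y) (g : Y -> X),
    (forall x, g (f x) = x) /\ (forall y, f (g y) = y) /\
    (forall x1 x2, leX x1 x2 <-> leY (f x1) (f x2)).

(* Main.v *)
Require Import Defs.
From Stdlib Require Import Classical ClassicalEpsilon FunctionalExtensionality PropExtensionality ProofIrrelevance Lia Arith List.

Section GroupBasics.
Variable G : group.
Local Notation "x * y" := (gmul G x y).
Local Notation "x ^-1" := (ginv G x) (at level 3).
Local Notation "1" := (gone G).

Lemma g_mulV x : x * x^-1 = 1.
Proof.
  rewrite <- (gmul1 G (x * x^-1)).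
  rewrite <- (gmulV G (x^-1)) at 1.
  rewrite <- gmulA. rewrite (gmulA G (x^-1) x (x^-1)). rewrite gmulV, gmul1.
  apply gmulV.
Qed.

Lemma g_mul1r x : x * 1 = x.
Proof. rewrite <- (gmulV G x), gmulA, g_mulV. apply gmul1. Qed.

Lemma g_invK x : (x^-1)^-1 = x.
Proof.
  rewrite <- (g_mul1r ((x^-1)^-1)). rewrite <- (gmulV G x).
  rewrite gmulA, gmulV. apply gmul1.
Qed.

Lemma g_mulKl x y : x^-1 * (x * y) = y.
Proof. rewrite gmulA, gmulV. apply gmul1. Qed.

Lemma g_invM x y : (x * y)^-1 = y^-1 * x^-1.
Proof.
  assert (h : (x * y) * (y^-1 * x^-1) = 1).
  { rewrite <- gmulA. rewrite (gmulA G y). rewrite g_mulV, gmul1. apply g_mulV. }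
  rewrite <- (g_mul1r ((x*y)^-1)). rewrite <- h. apply g_mulKl.
Qed.

Lemma g_mulKr x y : (x * y) * y^-1 = x.
Proof. rewrite <- gmulA, g_mulV. apply g_mul1r. Qed.

Lemma g_mulVKr x y : (x * y^-1) * y = x.
Proof. rewrite <- gmulA, gmulV. apply g_mul1r. Qed.

Section Sub.
Variable A : G -> Prop.
Hypothesis hA : subgroup A.
Lemma sg1 : A 1. Proof. apply hA. Qed.
Lemma sgM x y : A x -> A y -> A (x * y). Proof. apply hA. Qed.
Lemma sgV x : A x -> A (x^-1). Proof. apply hA. Qed.
Lemma sgVr x y : A (x * y) -> A y -> A x.
Proof. intros h1 h2. rewrite <- (g_mulKr x y). apply sgM; auto. apply sgV; auto. Qed.
Lemma sgVl x y : A (x * y) -> A x -> A y.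
Proof. intros h1 h2. rewrite <- (g_mulKl x y). apply sgM; auto. apply sgV; auto. Qed.
End Sub.

Definition inter (A B : G -> Prop) : G -> Prop := fun x => A x /\ B x.
Definition prodset (A B : G -> Prop) : G -> Prop :=
  fun x => exists a b, A a /\ B b /\ x = a * b.

Lemma inter_sg A B : subgroup A -> subgroup B -> subgroup (inter A B).
Proof.
  intros hA hB. split; [|split].
  - split; apply sg1; auto.
  - intros x y [? ?] [? ?]; split; apply sgM; auto.
  - intros x [? ?]; split; apply sgV; auto.
Qed.

Lemma prod_sg A As B : subgroup A -> subgroup As -> subgroup B ->
  subset B As -> normal_in A As -> subgroup (prodset A B).
Proof.
  intros hA hAs hB hBAs hn. split; [|split].
  - exists 1, 1. split; [apply sg1; auto|split; [apply sg1; auto|]]. symmetry; apply gmul1.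
  - intros x y [a [b [ha [hb ->]]]] [a' [b' [ha' [hb' ->]]]].
    exists (a * (b * a' * b^-1)), (b * b'). repeat split.
    + apply sgM; auto.
      pose proof (hn a' (b^-1) (sgV _ hAs _ (hBAs _ hb)) ha') as h.
      rewrite g_invK in h. rewrite gmulA in h. exact h.
    + apply sgM; auto.
    + rewrite <- !gmulA, g_mulKl. reflexivity.
  - intros x [a [b [ha [hb ->]]]].
    exists (b^-1 * ((a^-1) * b)), (b^-1). repeat split.
    + apply (hn (a^-1) b (hBAs _ hb)). apply sgV; auto.
    + apply sgV; auto.
    + rewrite g_invM. rewrite <- !gmulA. rewrite g_mulV, g_mul1r. reflexivity.
Qed.


Lemma g_mulVl x y : x * (x^-1 * y) = y.
Proof. rewrite gmulA, g_mulV. apply gmul1. Qed.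

Ltac gsimp := repeat (rewrite <- gmulA || rewrite g_invM || rewrite g_invK ||
  rewrite g_mulKl || rewrite g_mulVl || rewrite g_mulV || rewrite gmulV ||
  rewrite g_mul1r || rewrite gmul1).

Lemma normal_in_same (A B B' : G -> Prop) : normal_in A B -> same_set B B' -> normal_in A B'.
Proof. intros h hs x y hy hx. apply h; auto. apply hs; auto. Qed.

Section Chain.
Variables (A As : G -> Prop) (K : nat -> G -> Prop) (n : nat).
Hypotheses (hA : subgroup A) (hAs : subgroup As) (hAAs : subset A As)
  (hn : normal_in A As) (hsq : simple_quotient As A)
  (hK : forall j, j <= n -> subgroup (K j)) (hKn : forall x, K n x)
  (hKs : forall j, j < n -> subset (K j) (K (S j)) /\ normal_in (K j) (K (S j))).

Let Y j := prodset A (inter As (K j)).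

Lemma Y_sg j : j <= n -> subgroup (Y j).
Proof.
  intro hj. apply (prod_sg A As); auto. apply inter_sg; auto.
  intros x [h _]; auto.
Qed.

Lemma Y_normal j : j < n -> normal_in (Y j) (Y (S j)).
Proof.
  intros hj x y [a [b [ha [[hbAs hbK] ->]]]] [h [c [hh [[hcAs hcK] ->]]]].
  set (h' := a^-1 * h * (c * a * c^-1)).
  assert (hh' : A h').
  { unfold h'. apply sgM; auto. apply sgM; auto. apply sgV; auto.
    pose proof (hn a (c^-1) (sgV _ hAs _ hcAs) ha) as e. rewrite g_invK, gmulA in e. exact e. }
  exists (b^-1 * h' * b), (b^-1 * c * b). split; [|split;[split|]].
  - rewrite <- gmulA. apply hn; auto.
  - apply sgM; auto. apply sgM; auto. apply sgV; auto.
  - rewrite <- gmulA. apply (proj2 (hKs j hj)); auto.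
  - unfold h'. gsimp. reflexivity.
Qed.

Lemma chain_two : forall j, j <= n -> same_set (Y j) A \/ same_set (Y j) As.
Proof.
  assert (top : same_set (Y n) As).
  { intro x; split.
    - intros [a [b [ha [[hb _] ->]]]]. apply sgM; auto.
    - intro hx. exists 1, x. split; [apply sg1; auto|split;[split;auto|]]. symmetry; apply gmul1. }
  assert (AY : forall j, j <= n -> subset A (Y j)).
  { intros j hj x hx. exists x, 1. split; auto. split; [split|]. apply sg1; auto.
    apply sg1. apply hK; auto. symmetry; apply g_mul1r. }
  assert (YAs : forall j, subset (Y j) As).
  { intros j x [a [b [ha [[hb _] ->]]]]. apply sgM; auto. }
  assert (main : forall d, d <= n -> same_set (Y (n - d)) A \/ same_set (Y (n - d)) As).
  { induction d as [|d IH]; intro hd.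
    - right. replace (n - 0) with n by lia. exact top.
    - assert (e : n - d = S (n - S d)) by lia.
      destruct (IH ltac:(lia)) as [h | h]; rewrite e in h.
      + left. intro x; split.
        * intros [a [b [ha [[hb hbK] ->]]]]. apply h. exists a, b. repeat split; auto.
          apply (proj1 (hKs (n - S d) ltac:(lia))); auto.
        * apply AY; lia.
      + destruct hsq as [_ hmax]. apply hmax.
        * apply Y_sg; lia.
        * apply AY; lia.
        * apply YAs.
        * apply (normal_in_same _ _ _ (Y_normal (n - S d) ltac:(lia))); auto. }
  intros j hj. replace j with (n - (n - j)) by lia. apply main; lia.
Qed.
End Chain.

End GroupBasics.

Lemma least_nat (P : nat -> Prop) i : P i -> exists k, P k /\ forall k', k' < k -> ~ P k'.
Proof.
  revert P. induction i as [i IH] using lt_wf_ind. intros P hP.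
  destruct (classic (exists k', k' < i /\ P k')) as [[k' [h1 h2]]|h].
  - apply (IH k' h1 P h2).
  - exists i. split; auto. intros k' hk' hp. apply h; eauto.
Qed.

Section CSLGroup.
Variables (G : group) (n : nat) (H K : nat -> G -> Prop).
Hypotheses (hH : composition_series n H) (hK : composition_series n K).
Local Notation "x * y" := (gmul G x y).
Local Notation "x ^-1" := (ginv G x) (at level 3).
Local Notation "1" := (gone G).

Lemma cs_sg (L : nat -> G -> Prop) : composition_series n L -> forall i, i <= n -> subgroup (L i).
Proof. intros [_ [_ [h _]]]; auto. Qed.

Lemma cs_mono (L : nat -> G -> Prop) : composition_series n L ->
  forall i i', i <= i' -> i' <= n -> subset (L i) (L i').
Proof.
  intros hL i i' hii' hi'. induction hii' as [|i' h IH].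
  - intros x hx; exact hx.
  - intros x hx. apply (proj1 (proj2 (proj2 (proj2 hL)) i' ltac:(lia))). apply IH; auto; lia.
Qed.

Lemma cs_top (L : nat -> G -> Prop) : composition_series n L -> forall x, L n x.
Proof. intros [_ [h _]]; auto. Qed.

Lemma cs_bot (L : nat -> G -> Prop) : composition_series n L -> forall x, L 0 x <-> x = 1.
Proof. intros [h _]; auto. Qed.

Lemma cs_step (L : nat -> G -> Prop) : composition_series n L -> forall i, i < n ->
  subset (L i) (L (S i)) /\ normal_in (L i) (L (S i)) /\ simple_quotient (L (S i)) (L i).
Proof. intros [_ [_ [_ h]]]; auto. Qed.

Lemma chain_inst (A B : nat -> G -> Prop) : composition_series n A -> composition_series n B ->
  forall k j, S k <= n -> j <= n ->
  same_set (prodset G (A k) (inter G (A (S k)) (B j))) (A k) \/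
  same_set (prodset G (A k) (inter G (A (S k)) (B j))) (A (S k)).
Proof.
  intros hA hB k j hk hj.
  destruct (cs_step A hA k ltac:(lia)) as [s1 [s2 s3]].
  apply (chain_two G (A k) (A (S k)) B n); auto.
  - apply cs_sg; auto; lia.
  - apply cs_sg; auto.
  - apply cs_sg; auto.
  - apply cs_top; auto.
  - intros j' hj'. destruct (cs_step B hB j' hj') as [t1 [t2 _]]; auto.
Qed.

Definition X i j := inter G (H i) (K j).

Lemma transfer k l : S k <= n -> S l <= n ->
  (exists x, X (S k) (S l) x /\ ~ K l x) -> subset (X k (S l)) (K l) ->
  subset (X (S k) l) (H k).
Proof.
  intros hk hl [x [[hxH hxK] hxn]] hsub.
  destruct (chain_inst H K hH hK k l hk ltac:(lia)) as [e|e].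
  - intros y [hyH hyK]. apply e. exists 1, y. split; [apply sg1; apply cs_sg; auto; lia|].
    split; [split; auto|]. symmetry; apply gmul1.
  - exfalso. apply hxn. destruct (proj2 (e x) hxH) as [a [b [ha [[hbH hbK] ->]]]].
    assert (haK : K (S l) a).
    { apply (sgVr G _ (cs_sg K hK (S l) hl) a b); auto.
      apply (cs_mono K hK l (S l)); auto. }
    apply sgM. apply cs_sg; auto; lia. apply hsub. split; auto. auto.
Qed.

Lemma injH k k' l : S k <= k' -> S k' <= n -> S l <= n ->
  (exists x, X (S k) (S l) x /\ ~ H k x) -> subset (X (S k) l) (H k) ->
  (exists y, X (S k') (S l) y /\ ~ H k' y) -> subset (X (S k') l) (H k') -> False.
Proof.
  intros hkk hk' hl [x [[hxH hxK] hxn]] hs [y [[hyH hyK] hyn]] hs'.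
  destruct (chain_inst K H hK hH l (S k) hl ltac:(lia)) as [e|e].
  - apply hxn. apply hs. split; auto. apply e. exists 1, x.
    split; [apply sg1; apply cs_sg; auto; lia|]. split; [split; auto|]. symmetry; apply gmul1.
  - apply hyn. destruct (proj2 (e y) hyK) as [a [b [ha [[hbK hbH] ->]]]].
    assert (hbk' : H k' b) by (apply (cs_mono H hH (S k) k'); auto; lia).
    assert (haH : H (S k') a).
    { apply (sgVr G _ (cs_sg H hH (S k') hk') a b); auto.
      apply (cs_mono H hH k' (S k')); auto. }
    apply sgM. apply cs_sg; auto; lia. apply hs'. split; auto. auto.
Qed.


Lemma Xmono i j i' j' : i <= i' -> i' <= n -> j <= j' -> j' <= n -> subset (X i j) (X i' j').
Proof.
  intros h1 h2 h3 h4 x [a b]. split.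
  apply (cs_mono H hH i i'); auto. apply (cs_mono K hK j j'); auto.
Qed.

Definition e (A : G -> Prop) k := k < n /\ ~ subset (inter G A (H (S k))) (H k).

Lemma e_mono A B k : subset A B -> e A k -> e B k.
Proof. intros hAB [hk hn] ; split; auto. intro c. apply hn. intros x [h1 h2]. apply c. split; auto. Qed.

Lemma E1 i j k : i <= n -> j <= n -> (e (X i j) k <-> k < i /\ ~ subset (X (S k) j) (H k)).
Proof.
  intros hi hj. split.
  - intros [hk hs]. split.
    + destruct (Nat.lt_ge_cases k i) as [h|h]; auto. exfalso. apply hs.
      intros x [[hx1 hx2] hx3]. apply (cs_mono H hH i k); auto; lia.
    + intro c. apply hs. intros x [[hx1 hx2] hx3]. apply c. split; auto.
  - intros [hk hs]. split; [lia|]. intro c. apply hs. intros x [hx1 hx2]. apply c.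
    split; [split|]; auto. apply (cs_mono H hH (S k) i); auto.
Qed.

Lemma E2 i j i' j' : i <= n -> j <= n -> i' <= n -> j' <= n ->
  (forall k, e (X i j) k -> e (X i' j') k) -> subset (X i j) (X i' j').
Proof.
  intros hi hj hi' hj' hE. intros x hx. split.
  - destruct (Nat.le_gt_cases i i') as [h|h].
    + apply (cs_mono H hH i i'); auto. apply hx.
    + assert (main : forall d, d <= i - i' -> subset (X i j) (H (i - d))).
      { induction d as [|d IH]; intros hd.
        - replace (i - 0) with i by lia. intros y [hy _]; auto.
        - intros y hy. set (k := i - S d).
          assert (nk : ~ e (X i j) k).
          { intro c. apply hE in c. apply (E1 i' j' k) in c; auto. unfold k in c; lia. }
          apply NNPP. intro c. apply nk. split; [unfold k; lia|]. intro c2. apply c.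
          apply c2. split; auto. replace (S k) with (i - d) by (unfold k; lia).
          apply IH; auto; lia. }
      replace i' with (i - (i - i')) by lia. apply main; auto.
  - destruct (Nat.le_gt_cases j j') as [h|h].
    + apply (cs_mono K hK j j'); auto. apply hx.
    + revert x hx. apply NNPP. intro hnot.
      destruct (least_nat (fun k => ~ subset (X k j) (K j')) i hnot) as [k [hPk hmin]].
      assert (hki : k <= i).
      { destruct (Nat.le_gt_cases k i) as [h'|h']; auto. exfalso. apply (hmin i h' hnot). }
      destruct k as [|k0].
      { apply hPk. intros y [hy _]. apply (cs_bot H hH) in hy. subst y.
        apply sg1. apply cs_sg; auto. }
      assert (hk0 : subset (X k0 j) (K j')) by (apply NNPP; apply hmin; lia).
      assert (hQ : ~ subset (X (S k0) j) (K j')) by exact hPk.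
      destruct (least_nat (fun l => ~ subset (X (S k0) l) (K j')) j hQ) as [l [hQl hlmin]].
      assert (hlj : l <= j).
      { destruct (Nat.le_gt_cases l j) as [h'|h']; auto. exfalso. apply (hlmin j h' hQ). }
      assert (hl' : j' < l).
      { destruct (Nat.le_gt_cases l j') as [h'|h']; auto. exfalso. apply hQl.
        intros y [_ hy]. apply (cs_mono K hK l j'); auto. }
      destruct l as [|l0]; [lia|].
      assert (hl0 : subset (X (S k0) l0) (K j')) by (apply NNPP; apply hlmin; lia).
      assert (htr : subset (X (S k0) l0) (H k0)).
      { apply transfer; try lia.
        - apply NNPP. intro c. apply hQl. intros y hy. apply NNPP. intro hy2.
          apply c. exists y. split; auto. intro hyl. apply hy2. apply hl0.
          split; auto. apply hy.
        - intros y hy. apply (cs_mono K hK j' l0); try lia. apply hk0.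
          apply (Xmono k0 (S l0) k0 j); auto; lia. }
      assert (he : e (X i j) k0).
      { apply (E1 i j k0); auto. split; [lia|]. intro c. apply hPk.
        intros y [hy1 hy2]. apply hk0. split; auto. apply c. split; auto. }
      apply hE in he. apply (E1 i' j' k0) in he; auto. destruct he as [_ he].
      apply he. intros y hy. apply htr. apply (Xmono (S k0) j' (S k0) l0); auto; lia.
Qed.

Lemma stepH s j k : s < n -> j <= n -> e (X (S s) j) k -> e (X s j) k \/ k = s.
Proof.
  intros hs hj he. apply (E1 (S s) j k) in he; auto. destruct he as [h1 h2].
  destruct (Nat.lt_ge_cases k s) as [h|h]; [left|right; lia].
  apply (E1 s j k); auto; lia.
Qed.

Lemma stepK i s : i <= n -> s < n ->
  exists t, forall k, e (X i (S s)) k -> e (X i s) k \/ k = t.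
Proof.
  intros hi hs.
  destruct (classic (exists k0, e (X i (S s)) k0 /\ ~ e (X i s) k0)) as [[k0 [h1 h2]]|h].
  - exists k0. intros k hk. destruct (classic (e (X i s) k)) as [c|c]; [left; auto|right].
    apply (E1 i (S s) k) in hk; auto. apply (E1 i (S s) k0) in h1; auto.
    destruct hk as [hk1 hk2]. destruct h1 as [h11 h12].
    assert (c' : subset (X (S k) s) (H k)).
    { apply NNPP. intro d. apply c. apply (E1 i s k); auto; lia. }
    assert (h2' : subset (X (S k0) s) (H k0)).
    { apply NNPP. intro d. apply h2. apply (E1 i s k0); auto; lia. }
    assert (w : forall a, ~ subset (X (S a) (S s)) (H a) -> exists x, X (S a) (S s) x /\ ~ H a x).
    { intros a ha. apply NNPP. intro d. apply ha. intros x hx. apply NNPP. intro d2. apply d. eauto. }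
    destruct (Nat.lt_total k k0) as [hlt|[heq|hgt]]; auto; exfalso.
    + apply (injH k k0 s); auto; lia.
    + apply (injH k0 k s); auto; lia.
  - exists 0. intros k hk. left. apply NNPP. intro c. apply h. eauto.
Qed.

End CSLGroup.

Section FinPoset.
Variables (T : Type) (le : T -> T -> Prop).
Hypothesis po : partial_order le.

Lemma po_refl x : le x x. Proof. apply po. Qed.
Lemma po_anti x y : le x y -> le y x -> x = y. Proof. apply po. Qed.
Lemma po_trans x y z : le x y -> le y z -> le x z. Proof. apply po. Qed.

Lemma min_aux (P : T -> Prop) (l : list T) : forall x, P x ->
  exists m, P m /\ le m x /\ forall z, In z l -> P z -> le z m -> z = m.
Proof.
  induction l as [|a l IH]; intros x hx.
  - exists x. split; auto. split; [apply po_refl|]. intros z [].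
  - destruct (IH x hx) as [m [hm1 [hm2 hm3]]].
    destruct (classic (P a /\ le a m /\ a <> m)) as [[ha1 [ha2 ha3]]|ha].
    + destruct (IH a ha1) as [m' [h1 [h2 h3]]]. exists m'. split; auto.
      split. { apply (po_trans _ a); auto. apply (po_trans _ m); auto. }
      intros z [<-|hz] hpz hzm.
      * apply po_anti; auto.
      * apply h3; auto.
    + exists m. split; auto. split; auto. intros z [<-|hz] hpz hzm.
      * apply NNPP. intro c. apply ha. auto.
      * apply hm3; auto.
Qed.
End FinPoset.

Lemma flip_po (T : Type) (le : T -> T -> Prop) : partial_order le -> partial_order (fun x y => le y x).
Proof. intros [h1 [h2 h3]]. split; [|split]; eauto. Qed.

Lemma min_exists (T : Type) (le : T -> T -> Prop) : partial_order le -> finite_type T ->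
  forall (P : T -> Prop) x, P x -> exists m, P m /\ le m x /\ forall z, P z -> le z m -> z = m.
Proof.
  intros po [l hl] P x hx. destruct (min_aux T le po P l x hx) as [m [h1 [h2 h3]]].
  exists m. split; auto.
Qed.

Lemma max_exists (T : Type) (le : T -> T -> Prop) : partial_order le -> finite_type T ->
  forall (P : T -> Prop) x, P x -> exists m, P m /\ le x m /\ forall z, P z -> le m z -> z = m.
Proof.
  intros po hf P x hx. apply (min_exists T (fun a b => le b a) (flip_po T le po) hf P x hx).
Qed.

Lemma meets_from_joins (T : Type) (le : T -> T -> Prop) : partial_order le -> finite_type T ->
  (forall x y, exists j, is_join le x y j) -> forall bot, (forall x, le bot x) ->
  forall x y, exists m, is_meet le x y m.
Proof.
  intros po hf hj bot hbot x y.
  destruct (max_exists T le po hf (fun u => le u x /\ le u y) bot (conj (hbot x) (hbot y)))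
    as [m [[hmx hmy] [_ hmax]]].
  exists m. split; auto. split; auto. intros u hux huy.
  destruct (hj u m) as [w [hw1 [hw2 hw3]]].
  assert (wm : w = m). { apply hmax. split; apply hw3; auto. auto. }
  subst w; auto.
Qed.

Section CSLLat.
Variables (G : group) (n : nat) (H K : nat -> G -> Prop).
Hypotheses (hH : composition_series n H) (hK : composition_series n K).

Local Notation C := (CSL n H K).
Local Notation lec := (@CSL_dual_le G n H K).
Local Notation XX := (X G H K).

Definition mk (i j : nat) : C.
Proof.
  exists (fun x => H (min i n) x /\ K (min j n) x).
  exists (min i n), (min j n). split; [lia|split; [lia|reflexivity]].
Defined.

Lemma csl_eq (A B : C) : (forall x, proj1_sig A x <-> proj1_sig B x) -> A = B.
Proof.
  destruct A as [a pa], B as [b pb]; simpl. intro h.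
  assert (a = b) by (apply functional_extensionality; intro x; apply propositional_extensionality; auto).
  subst b. f_equal. apply proof_irrelevance.
Qed.

Lemma csl_rep (A : C) : exists i j, i <= n /\ j <= n /\ A = mk i j.
Proof.
  destruct A as [a [i [j [hi [hj ->]]]]]. exists i, j. split; auto. split; auto.
  apply csl_eq. simpl. rewrite !Nat.min_l by lia. tauto.
Qed.

Lemma mk_proj i j : i <= n -> j <= n -> forall x, proj1_sig (mk i j) x <-> XX i j x.
Proof. intros hi hj x. simpl. rewrite !Nat.min_l by lia. unfold X, inter. tauto. Qed.

Lemma le_mk i j i' j' : i <= n -> j <= n -> i' <= n -> j' <= n ->
  (lec (mk i j) (mk i' j') <-> subset (XX i' j') (XX i j)).
Proof.
  intros. unfold CSL_dual_le. split; intros h x hx.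
  - apply (mk_proj i j); auto. apply h. apply (mk_proj i' j'); auto.
  - apply (mk_proj i j); auto. apply h. apply (mk_proj i' j'); auto.
Qed.

Lemma csl_po : partial_order lec.
Proof.
  split; [|split].
  - intros x y h; auto.
  - intros x y h1 h2. apply csl_eq. intro z; split; auto.
  - intros x y z h1 h2 w hw. auto.
Qed.

Lemma csl_fin : finite_type C.
Proof.
  exists (flat_map (fun i => map (fun j => mk i j) (seq 0 (S n))) (seq 0 (S n))).
  intro A. destruct (csl_rep A) as [i [j [hi [hj ->]]]].
  apply in_flat_map. exists i. split. apply in_seq; lia.
  apply in_map_iff. exists j. split; auto. apply in_seq; lia.
Qed.

Lemma csl_join i j i' j' : i <= n -> j <= n -> i' <= n -> j' <= n ->
  is_join lec (mk i j) (mk i' j') (mk (min i i') (min j j')).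
Proof.
  intros hi hj hi' hj'.
  split; [|split].
  - apply le_mk; try lia. apply (Xmono G n H K hH hK); lia.
  - apply le_mk; try lia. apply (Xmono G n H K hH hK); lia.
  - intros u h1 h2. destruct (csl_rep u) as [a [b [ha [hb ->]]]].
    apply (proj1 (le_mk i j a b hi hj ha hb)) in h1.
    apply (proj1 (le_mk i' j' a b hi' hj' ha hb)) in h2.
    apply le_mk; try lia.
    intros x hx. destruct (h1 x hx) as [x1 x2]. destruct (h2 x hx) as [y1 y2].
    split.
    + destruct (Nat.min_spec i i') as [[_ ->]|[_ ->]]; auto.
    + destruct (Nat.min_spec j j') as [[_ ->]|[_ ->]]; auto.
Qed.

Lemma csl_joins : forall x y, exists j, is_join lec x y j.
Proof.
  intros x y. destruct (csl_rep x) as [i [j [hi [hj ->]]]].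
  destruct (csl_rep y) as [i' [j' [hi' [hj' ->]]]].
  eexists. apply csl_join; auto.
Qed.

Lemma csl_bot : forall x, lec (mk n n) x.
Proof.
  intro x. destruct (csl_rep x) as [i [j [hi [hj ->]]]]. apply le_mk; auto.
  intros y _. split; apply cs_top; auto.
Qed.

Lemma csl_finite_lattice : finite_lattice lec.
Proof.
  split; [apply csl_po|split; [apply csl_fin|split; [constructor; exact (mk 0 0)|split]]].
  - apply csl_joins.
  - apply (meets_from_joins C lec csl_po csl_fin csl_joins (mk n n) csl_bot).
Qed.

Lemma csl_slim : slim lec.
Proof.
  assert (hJ : forall x, join_irreducible lec x -> exists a, a <= n /\ (x = mk a n \/ x = mk n a)).
  { intros x hx. destruct (csl_rep x) as [i [j [hi [hj ->]]]].
    pose proof (csl_join i n n j hi ltac:(lia) ltac:(lia) hj) as hjn.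
    rewrite Nat.min_l in hjn by lia. rewrite Nat.min_r in hjn by lia.
    destruct (hx _ _ hjn) as [e|e]; [exists i | exists j]; auto. }
  assert (comp : forall a b, a <= n -> b <= n ->
     (lec (mk a n) (mk b n) \/ lec (mk b n) (mk a n)) /\ (lec (mk n a) (mk n b) \/ lec (mk n b) (mk n a))).
  { intros a b ha hb. split.
    - destruct (Nat.le_ge_cases a b); [right|left]; apply le_mk; auto;
        apply (Xmono G n H K hH hK); lia.
    - destruct (Nat.le_ge_cases a b); [right|left]; apply le_mk; auto;
        apply (Xmono G n H K hH hK); lia. }
  intros [a [b [c [ja [jb [jc [iab [iac ibc]]]]]]]].
  destruct (hJ a ja) as [x [hx [ea|ea]]]; destruct (hJ b jb) as [y [hy [eb|eb]]];
  destruct (hJ c jc) as [z [hz [ec|ec]]]; subst a b c;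
  unfold incomparable in *;
  try (destruct (comp x y hx hy) as [[?|?] [?|?]]; tauto);
  try (destruct (comp x z hx hz) as [[?|?] [?|?]]; tauto);
  try (destruct (comp y z hy hz) as [[?|?] [?|?]]; tauto).
Qed.


Definition ee (A : C) k := e G n H (proj1_sig A) k.

Lemma L1 (A B : C) : lec A B <-> (forall k, ee B k -> ee A k).
Proof.
  split.
  - intros h k. apply e_mono. exact h.
  - destruct (csl_rep A) as [i [j [hi [hj ->]]]]. destruct (csl_rep B) as [i' [j' [hi' [hj' ->]]]].
    intro h. apply le_mk; auto. apply (E2 G n H K hH hK); auto.
    intros k hk. assert (hk' : ee (mk i' j') k).
    { unfold ee. eapply e_mono; [|exact hk]. intros x hx. apply mk_proj; auto. }
    apply h in hk'. unfold ee in hk'. eapply e_mono; [|exact hk']. intros x hx. apply mk_proj; auto.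
Qed.

Lemma ee_ext (A B : C) : (forall k, ee A k <-> ee B k) -> A = B.
Proof.
  intro h. apply (po_anti _ _ csl_po); apply L1; intros k hk; apply h; auto.
Qed.

Lemma join_unique (A B J J' : C) : is_join lec A B J -> is_join lec A B J' -> J = J'.
Proof.
  intros [h1 [h2 h3]] [h1' [h2' h3']]. apply (po_anti _ _ csl_po); auto.
Qed.

Lemma L2 (A B J : C) : is_join lec A B J -> forall k, ee J k <-> ee A k /\ ee B k.
Proof.
  intros hJ k.
  destruct (csl_rep A) as [i [j [hi [hj ->]]]]. destruct (csl_rep B) as [i' [j' [hi' [hj' ->]]]].
  rewrite (join_unique _ _ _ _ hJ (csl_join i j i' j' hi hj hi' hj')).
  assert (conv : forall p q, p <= n -> q <= n -> (ee (mk p q) k <-> e G n H (X G H K p q) k)).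
  { intros p q hp hq. unfold ee. split; apply e_mono; intros x hx; apply (mk_proj p q); auto. }
  rewrite !conv by lia. rewrite !(E1 G n H K hH) by lia.
  split.
  - intros [h1 h2]. split; split; try lia; intro c; apply h2; intros x hx; apply c.
    + apply (Xmono G n H K hH hK (S k) (min j j') (S k) j); try lia; exact hx.
    + apply (Xmono G n H K hH hK (S k) (min j j') (S k) j'); try lia; exact hx.
  - intros [[h1 h2] [h1' h2']]. split; [lia|].
    destruct (Nat.min_spec j j') as [[_ ->]|[_ ->]]; auto.
Qed.

Lemma disc (Q : nat -> Prop) lo hi : lo <= hi -> Q lo -> ~ Q hi ->
  exists s, lo <= s < hi /\ Q s /\ ~ Q (S s).
Proof.
  intros h. induction h as [|hi h IH]; intros hq hn.
  - contradiction.
  - destruct (classic (Q hi)) as [c|c].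
    + exists hi. split; [lia|auto].
    + destruct (IH hq c) as [s [? ?]]. exists s. split; [lia|auto].
Qed.

Lemma conv_ee p q k : p <= n -> q <= n -> (ee (mk p q) k <-> e G n H (XX p q) k).
Proof. intros hp hq. unfold ee. split; apply e_mono; intros x hx; apply (mk_proj p q); auto. Qed.

Lemma L3 (A B : C) : covers lec A B ->
  exists t, ~ ee B t /\ forall k, ee A k <-> ee B k \/ k = t.
Proof.
  intros [[hle hne] hcov].
  assert (main : exists t, forall k, ee A k -> ee B k \/ k = t).
  { destruct (csl_rep A) as [i [j [hi [hj eA]]]]. destruct (csl_rep B) as [i' [j' [hi' [hj' eB]]]].
    subst A B. apply (proj1 (le_mk i j i' j' hi hj hi' hj')) in hle.
    set (i0 := min i i'). set (j0 := min j j').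
    assert (eB0 : mk i' j' = mk i0 j0).
    { apply (po_anti _ _ csl_po).
      - apply le_mk; auto; try (unfold i0, j0; lia).
        apply (Xmono G n H K hH hK); unfold i0, j0; lia.
      - apply le_mk; auto; try (unfold i0, j0; lia).
        intros x hx. destruct (hle x hx) as [a b]. destruct hx as [c d]. split.
        + unfold i0. destruct (Nat.min_spec i i') as [[_ ->]|[_ ->]]; auto.
        + unfold j0. destruct (Nat.min_spec j j') as [[_ ->]|[_ ->]]; auto. }
    rewrite eB0 in *.
    assert (two : forall p q, i0 <= p -> p <= i -> j0 <= q -> q <= j ->
               mk p q = mk i j \/ mk p q = mk i0 j0).
    { intros p q h1 h2 h3 h4. apply hcov.
      - apply le_mk; try (unfold i0, j0 in *; lia). apply (Xmono G n H K hH hK); lia.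
      - apply le_mk; try (unfold i0, j0 in *; lia). apply (Xmono G n H K hH hK); unfold i0, j0 in *; lia. }
    assert (hi0 : i0 <= i) by (unfold i0; lia). assert (hj0 : j0 <= j) by (unfold j0; lia).
    destruct (classic (mk i0 j = mk i j)) as [c|c].
    - destruct (disc (fun s => mk i0 s <> mk i j) j0 j hj0) as [s [hs [q1 q2]]]; auto.
      assert (q2' : mk i0 (S s) = mk i j) by (apply NNPP; exact q2).
      assert (q1' : mk i0 s = mk i0 j0).
      { destruct (two i0 s) as [z|z]; auto; try lia. contradiction. }
      destruct (stepK G n H K hH hK i0 s ltac:(unfold i0; lia) ltac:(lia)) as [t ht].
      exists t. intros k hk. rewrite <- q2' in hk. rewrite <- q1'.
      rewrite conv_ee in hk by lia. rewrite conv_ee by lia. auto.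
    - destruct (disc (fun s => mk s j <> mk i j) i0 i hi0) as [s [hs [q1 q2]]]; auto.
      assert (q2' : mk (S s) j = mk i j) by (apply NNPP; exact q2).
      assert (q1' : mk s j = mk i0 j0).
      { destruct (two s j) as [z|z]; auto; try lia. contradiction. }
      exists s. intros k hk. rewrite <- q2' in hk. rewrite <- q1'.
      rewrite conv_ee in hk by lia. rewrite conv_ee by lia.
      apply (stepH G n H K hH s j k); auto; lia. }
  destruct main as [t ht]. exists t.
  assert (hBA : forall k, ee B k -> ee A k) by (apply L1; auto).
  assert (hBt : ~ ee B t).
  { intro c. apply hne. apply (po_anti _ _ csl_po); auto. apply L1.
    intros k hk. destruct (ht k hk) as [?| ->]; auto. }
  split; auto. intro k. split; auto. intros [h| ->]; auto.
  apply NNPP. intro c. apply hne. apply (po_anti _ _ csl_po); auto. apply L1.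
  intros k hk. destruct (ht k hk) as [?| ->]; auto. contradiction.
Qed.

Lemma csl_semimodular : semimodular lec.
Proof.
  intros A B Cc AC BC hcov hAC hBC.
  destruct (L3 A B hcov) as [t [hBt ht]].
  pose proof (L2 _ _ _ hAC) as eAC. pose proof (L2 _ _ _ hBC) as eBC.
  destruct (classic (ee Cc t)) as [hc|hc].
  - right. split; [split|].
    + apply L1. intros k hk. apply eAC. apply eBC in hk. destruct hk as [h1 h2].
      split; auto. apply ht; auto.
    + intro e0. assert (h1 : ee AC t) by (apply eAC; split; auto; apply ht; auto).
      rewrite e0 in h1. apply eBC in h1. tauto.
    + intros z h1 h2. destruct (classic (ee z t)) as [hz|hz].
      * left. apply ee_ext. intro k. split.
        -- intro hk. exact (proj1 (L1 _ _) h1 k hk).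
        -- intro hk. apply eAC in hk. destruct hk as [hk1 hk2]. apply ht in hk1.
           destruct hk1 as [hk1| ->]; auto. apply (proj1 (L1 _ _) h2). apply eBC; auto.
      * right. apply ee_ext. intro k. split.
        -- intro hk. apply eBC. pose proof (proj1 (L1 _ _) h1 k hk) as q. apply eAC in q.
           destruct q as [q1 q2]. apply ht in q1. destruct q1 as [q1| ->]; auto. contradiction.
        -- intro hk. apply (proj1 (L1 _ _) h2); auto.
  - left. apply ee_ext. intro k. rewrite eAC, eBC, ht. split.
    + intros [[h| ->] h2]; auto. contradiction.
    + intros [h1 h2]; auto.
Qed.

Lemma csl_ssl : slim_semimodular_lattice lec.
Proof. split; [apply csl_finite_lattice|split; [apply csl_slim|apply csl_semimodular]]. Qed.

End CSLLat.

Section Lat.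
Variables (L : Type) (le : L -> L -> Prop).
Hypothesis hL : slim_semimodular_lattice le.

Lemma Lpo : partial_order le. Proof. apply hL. Qed.
Lemma Lfin : finite_type L. Proof. apply hL. Qed.
Lemma Linh : inhabited L. Proof. apply hL. Qed.
Lemma Ljoin : forall x y, exists j, is_join le x y j. Proof. apply hL. Qed.
Lemma Lmeet : forall x y, exists m, is_meet le x y m. Proof. apply hL. Qed.
Lemma Lslim : slim le. Proof. apply hL. Qed.
Lemma Lsm : semimodular le. Proof. apply hL. Qed.

Local Notation refl := (po_refl _ _ Lpo).
Local Notation anti := (po_anti _ _ Lpo).
Local Notation trans := (po_trans _ _ Lpo).

Lemma top_ex : exists t, forall x, le x t.
Proof.
  destruct Lfin as [l hl]. destruct Linh as [x0].
  assert (h : forall l, exists u, forall x, In x l -> le x u).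
  { induction l0 as [|a l0 IH].
    - exists x0. intros x [].
    - destruct IH as [u hu]. destruct (Ljoin a u) as [j [h1 [h2 _]]].
      exists j. intros x [<-|hx]; auto. apply trans with u; auto. }
  destruct (h l) as [u hu]. exists u. auto.
Qed.

Lemma bot_ex : exists b, forall x, le b x.
Proof.
  destruct Lfin as [l hl]. destruct Linh as [x0].
  assert (h : forall l, exists u, forall x, In x l -> le u x).
  { induction l0 as [|a l0 IH].
    - exists x0. intros x [].
    - destruct IH as [u hu]. destruct (Lmeet a u) as [j [h1 [h2 _]]].
      exists j. intros x [<-|hx]; auto. apply trans with u; auto. }
  destruct (h l) as [u hu]. exists u. auto.
Qed.

Definition meet_irr m := forall a b, is_meet le a b m -> m = a \/ m = b.

Lemma ji_below y x : ~ le y x -> exists j, join_irreducible le j /\ le j y /\ ~ le j x.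
Proof.
  intro h.
  destruct (min_exists L le Lpo Lfin (fun w => le w y /\ ~ le w x) y (conj (refl _) h))
    as [m [[hm1 hm2] [_ hmin]]].
  exists m. split; auto. intros a b [ha [hb hab]].
  apply NNPP. intro c. apply hm2. apply hab.
  - apply NNPP. intro d. apply c. left. symmetry. apply hmin; auto. split; auto.
    apply trans with m; auto.
  - apply NNPP. intro d. apply c. right. symmetry. apply hmin; auto. split; auto.
    apply trans with m; auto.
Qed.

Lemma mi_above y x : ~ le y x -> exists m, meet_irr m /\ le x m /\ ~ le y m.
Proof.
  intro h.
  destruct (max_exists L le Lpo Lfin (fun w => le x w /\ ~ le y w) x (conj (refl _) h))
    as [m [[hm1 hm2] [_ hmax]]].
  exists m. split; auto. intros a b [ha [hb hab]].
  apply NNPP. intro c. apply hm2. apply hab.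
  - apply NNPP. intro d. apply c. left. symmetry. apply hmax; auto. split; auto.
    apply trans with m; auto.
  - apply NNPP. intro d. apply c. right. symmetry. apply hmax; auto. split; auto.
    apply trans with m; auto.
Qed.

Lemma cover_meet x y m : covers le x y -> le x m -> ~ le y m -> is_meet le y m x.
Proof.
  intros [[hxy hne] hc] hxm hym.
  destruct (Lmeet y m) as [w [w1 [w2 w3]]].
  assert (hw : w = x).
  { destruct (hc w (w3 x hxy hxm) w1) as [e|e]; auto. subst w. exfalso. auto. }
  subst w. split; auto.
Qed.

Lemma uniq_label x y m1 m2 : covers le x y -> meet_irr m1 -> meet_irr m2 ->
  le x m1 -> ~ le y m1 -> le x m2 -> ~ le y m2 -> m1 = m2.
Proof.
  intros hc hm1 hm2 hx1 hy1 hx2 hy2.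
  assert (nle : forall m1 m2, meet_irr m1 -> le x m1 -> ~ le y m1 -> ~ le y m2 ->
                 le m1 m2 -> m1 = m2).
  { clear m1 m2 hm1 hm2 hx1 hy1 hx2 hy2. intros m1 m2 hm1 hx1 hy1 hy2 h12.
    apply NNPP. intro hne.
    destruct (Ljoin y m1) as [w hw].
    assert (hj1 : is_join le x m1 m1).
    { split; auto. split; [apply refl|]. intros u _ h; auto. }
    destruct (Lsm x y m1 m1 w hc hj1 hw) as [e|hcw].
    { subst w. apply hy1. apply hw. }
    destruct (Lmeet m2 w) as [v [v1 [v2 v3]]].
    assert (hv : v = m1 \/ v = w).
    { destruct hcw as [_ hcw]. apply hcw; auto. apply v3; auto. apply hw. }
    destruct hv as [-> | ->].
    - destruct (hm1 m2 w) as [e|e].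
      + split; auto.
      + auto.
      + subst w. apply hy1. apply hw.
    - apply hy2. apply trans with w; auto. apply hw. }
  apply NNPP. intro hne.
  assert (n12 : ~ le m1 m2) by (intro c; apply hne; apply nle; auto).
  assert (n21 : ~ le m2 m1) by (intro c; apply hne; symmetry; apply nle; auto).
  destruct hc as [[hxy hxne] hcc] eqn:Ehc.
  assert (nyx : ~ le y x) by (intro c; apply hxne; apply anti; auto).
  destruct (ji_below y x nyx) as [j [jj [jy jx]]].
  destruct (ji_below m1 m2 n12) as [j1 [jj1 [j1m1 j1m2]]].
  destruct (ji_below m2 m1 n21) as [j2 [jj2 [j2m2 j2m1]]].
  assert (jm : forall m, le x m -> ~ le y m -> ~ le j m).
  { intros m h1 h2 c. destruct (Ljoin x j) as [w [w1 [w2 w3]]].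
    assert (wy : le w y) by (apply w3; auto).
    destruct (hcc w w1 wy) as [->| ->]; auto. }
  assert (jx1 : forall m, meet_irr m -> le x m -> ~ le y m -> forall j', le j' m -> le j' j -> le j' x).
  { intros m hm h1 h2 j' hj'm hj'j. pose proof (cover_meet x y m hc h1 h2) as hme.
    apply hme; auto. apply trans with j; auto. }
  apply Lslim. exists j, j1, j2. split; auto. split; auto. split; auto.
  split; [|split]; split.
  - intro c. apply (jm m1); auto. apply trans with j1; auto.
  - intro c. apply j1m2. apply trans with x; auto. apply (jx1 m1); auto.
  - intro c. apply (jm m2); auto. apply trans with j2; auto.
  - intro c. apply j2m1. apply trans with x; auto. apply (jx1 m2); auto.
  - intro c. apply j1m2. apply trans with j2; auto.
  - intro c. apply j2m1. apply trans with j1; auto.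
Qed.


Definition phi x m := meet_irr m /\ ~ le x m.

Lemma phi_le x y : le x y <-> forall m, phi x m -> phi y m.
Proof.
  split.
  - intros h m [h1 h2]. split; auto. intro c. apply h2. apply trans with y; auto.
  - intro h. apply NNPP. intro c. destruct (mi_above x y c) as [m [h1 [h2 h3]]].
    destruct (h m (conj h1 h3)) as [_ h4]. auto.
Qed.

Lemma phi_join a b j m : is_join le a b j -> (phi j m <-> phi a m \/ phi b m).
Proof.
  intros [h1 [h2 h3]]. unfold phi. split.
  - intros [hm hn]. apply NNPP. intro c. apply hn. apply h3.
    + apply NNPP. intro d. apply c. left. auto.
    + apply NNPP. intro d. apply c. right. auto.
  - intros [[hm hn]|[hm hn]]; split; auto; intro c; apply hn; apply trans with j; auto.
Qed.

Lemma phi_cover x y : covers le x y ->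
  exists m, phi y m /\ ~ phi x m /\ forall m', phi y m' -> ~ phi x m' -> m' = m.
Proof.
  intros hc. destruct hc as [[hxy hne] hcc] eqn:E.
  assert (nyx : ~ le y x) by (intro c; apply hne; apply anti; auto).
  destruct (mi_above y x nyx) as [m [h1 [h2 h3]]].
  exists m. split; [split; auto|split].
  - intros [_ c]; auto.
  - intros m' [hm' hy'] hx'. assert (hxm' : le x m').
    { apply NNPP. intro c. apply hx'. split; auto. }
    apply (uniq_label x y m' m); auto.
Qed.

Definition chain (C : L -> Prop) := forall s t, C s -> C t -> le s t \/ le t s.

Definition cnt (l : list L) (P : L -> Prop) : nat :=
  length (filter (fun z => if excluded_middle_informative (P z) then true else false) l).

Lemma cnt_le l P Q : (forall z, P z -> Q z) -> cnt l P <= cnt l Q.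
Proof.
  intro h. unfold cnt. induction l as [|a l IH]; simpl; auto.
  destruct (excluded_middle_informative (P a)); destruct (excluded_middle_informative (Q a));
    simpl; try lia. exfalso; auto.
Qed.

Lemma cnt_lt l P Q t : (forall z, P z -> Q z) -> In t l -> Q t -> ~ P t -> cnt l P < cnt l Q.
Proof.
  intros h hin hq hp. unfold cnt. induction l as [|a l IH]; simpl in *; [contradiction|].
  destruct hin as [->|hin].
  - destruct (excluded_middle_informative (P t)); [contradiction|].
    destruct (excluded_middle_informative (Q t)); [|contradiction]. simpl.
    pose proof (cnt_le l P Q h). unfold cnt in H. lia.
  - destruct (excluded_middle_informative (P a)); destruct (excluded_middle_informative (Q a));
      simpl; try (specialize (IH hin); lia). exfalso; auto.
Qed.

Definition no3 (P : L -> Prop) := ~ exists a b c, P a /\ P b /\ P c /\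
  incomparable le a b /\ incomparable le a c /\ incomparable le b c.

Lemma dil_final (P : L -> Prop) (t : L) (C1 D1 : L -> Prop) x1 :
  P t -> chain C1 -> chain D1 -> (forall z, C1 z -> P z /\ z <> t) ->
  (forall z, D1 z -> P z /\ z <> t) -> (forall z, P z -> z <> t -> C1 z \/ D1 z) ->
  (forall z, C1 z -> (exists w, (P w /\ w <> t) /\ incomparable le z w) -> le z x1) ->
  le x1 t ->
  exists C D, chain C /\ chain D /\ (forall z, C z -> P z) /\ (forall z, D z -> P z) /\
    (forall z, P z -> C z \/ D z).
Proof.
  intros hPt hC1 hD1 hC1P hD1P hcov hx1 hx1t.
  set (C := fun z => (C1 z /\ le z x1) \/ z = t).
  exists C, (fun z => P z /\ ~ C z). split; [|split; [|split; [|split]]].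
  - intros a b [[ha1 ha2]| ->] [[hb1 hb2]| ->];
      [apply hC1; auto | left; apply trans with x1; auto
      | right; apply trans with x1; auto | left; apply refl].
  - intros a b [ha1 ha2] [hb1 hb2]. apply NNPP. intro c.
    assert (ha : a <> t) by (intro e; apply ha2; right; auto).
    assert (hb : b <> t) by (intro e; apply hb2; right; auto).
    assert (inc : incomparable le a b) by (split; intro d; apply c; auto).
    destruct (hcov a ha1 ha) as [ca|da].
    + apply ha2. left. split; auto. apply hx1; auto. exists b. split; auto.
    + destruct (hcov b hb1 hb) as [cb|db].
      * apply hb2. left. split; auto. apply hx1; auto. exists a. split; auto.
        destruct inc; split; auto.
      * apply c. apply hD1; auto.
  - intros z [[h _]| ->]; auto. apply hC1P; auto.
  - intros z [h _]; auto.
  - intros z hz. destruct (classic (C z)); auto.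
Qed.

Lemma dil2_aux l (hl : forall x, In x l) : forall N (P : L -> Prop), cnt l P <= N -> no3 P ->
  exists C D, chain C /\ chain D /\ (forall z, C z -> P z) /\ (forall z, D z -> P z) /\
    (forall z, P z -> C z \/ D z).
Proof.
  induction N as [|N IH]; intros P hN h3.
  - exists (fun _ => False), (fun _ => False).
    split; [intros ? ? []|split; [intros ? ? []|split; [intros ? []|split; [intros ? []|]]]].
    intros z hz. exfalso. assert (cnt l (fun _ => False) < cnt l P) by
      (apply (cnt_lt l _ _ z); [intros ? []| apply hl | exact hz | tauto]). lia.
  - destruct (classic (exists x, P x)) as [[x hx]|hne].
    2:{ apply IH; auto. assert (e : cnt l P <= cnt l (fun _ => False)).
        { apply cnt_le. intros z hz. apply hne. eauto. }
        assert (cnt l (fun _ => False) = 0).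
        { clear. induction l as [|a l IH]; simpl; auto. unfold cnt in *. simpl.
          destruct (excluded_middle_informative False); [contradiction|auto]. }
        lia. }
    destruct (max_exists L le Lpo Lfin P x hx) as [t [hPt [_ htmax]]].
    set (P' := fun z => P z /\ z <> t).
    assert (hc : cnt l P' <= N).
    { assert (cnt l P' < cnt l P); [|lia]. apply (cnt_lt l _ _ t); auto.
      - intros z [h _]; auto.
      - intros [_ c]; auto. }
    assert (h3' : no3 P').
    { intros [a [b [c [[ha _] [[hb _] [[hc' _] r]]]]]]. apply h3. exists a, b, c. auto. }
    destruct (IH P' hc h3') as [C1 [D1 [hC1 [hD1 [hC1P [hD1P hcov]]]]]].
    destruct (classic (exists a b, P' a /\ P' b /\ incomparable le a b)) as [[a [b [ha [hb hab]]]]|hno].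
    + set (AC := fun z => exists w, P' w /\ incomparable le z w).
      assert (sym : forall u w, incomparable le u w -> incomparable le w u)
        by (intros u w [p q]; split; auto).
      assert (ex : exists c0 d0, C1 c0 /\ AC c0 /\ D1 d0 /\ AC d0).
      { destruct (hcov a ha) as [ca|da]; destruct (hcov b hb) as [cb|db].
        - exfalso. destruct hab as [p q]. destruct (hC1 a b ca cb); auto.
        - exists a, b. split; auto. split; [exists b; auto|]. split; auto. exists a; split; auto.
        - exists b, a. split; auto. split; [exists a; split; auto|]. split; auto. exists b; auto.
        - exfalso. destruct hab as [p q]. destruct (hD1 a b da db); auto. }
      destruct ex as [c0 [d0 [hc0 [hac0 [hd0 had0]]]]].
      destruct (max_exists L le Lpo Lfin (fun z => C1 z /\ AC z) c0 (conj hc0 hac0))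
        as [x1 [[hx1C hx1A] [_ hx1m]]].
      destruct (max_exists L le Lpo Lfin (fun z => D1 z /\ AC z) d0 (conj hd0 had0))
        as [x2 [[hx2D hx2A] [_ hx2m]]].
      assert (gx1 : forall z, C1 z -> AC z -> le z x1).
      { intros z hz hza. destruct (hC1 z x1 hz hx1C) as [?|h]; auto.
        rewrite (hx1m z (conj hz hza) h). apply refl. }
      assert (gx2 : forall z, D1 z -> AC z -> le z x2).
      { intros z hz hza. destruct (hD1 z x2 hz hx2D) as [?|h]; auto.
        rewrite (hx2m z (conj hz hza) h). apply refl. }
      assert (inc12 : incomparable le x1 x2).
      { destruct hx1A as [w1 [hw1 i1]]. destruct hx2A as [w2 [hw2 i2]].
        assert (w1D : D1 w1).
        { destruct (hcov w1 hw1) as [c|c]; auto. exfalso. destruct i1 as [p q].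
          destruct (hC1 x1 w1 hx1C c); auto. }
        assert (w2C : C1 w2).
        { destruct (hcov w2 hw2) as [c|c]; auto. exfalso. destruct i2 as [p q].
          destruct (hD1 x2 w2 hx2D c); auto. }
        assert (l1 : le w1 x2). { apply gx2; auto. exists x1. split; [apply hC1P; auto|auto]. }
        assert (l2 : le w2 x1). { apply gx1; auto. exists x2. split; [apply hD1P; auto|auto]. }
        split; intro c.
        - destruct i2 as [p q]. apply q. apply trans with x1; auto.
        - destruct i1 as [p q]. apply q. apply trans with x2; auto. }
      assert (P1 : P' x1) by (apply hC1P; auto).
      assert (P2 : P' x2) by (apply hD1P; auto).
      assert (cmp : le x1 t \/ le x2 t).
      { destruct P1 as [P1 n1]. destruct P2 as [P2 n2].
        assert (f1 : le t x1 -> False) by (intro c; apply n1; apply htmax; auto).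
        assert (f2 : le t x2 -> False) by (intro c; apply n2; apply htmax; auto).
        apply NNPP. intro c. apply h3. exists t, x1, x2. split; auto. split; auto. split; auto.
        split; [split; auto|split; [split; auto|auto]]. }
      destruct cmp as [c1|c2].
      * apply (dil_final P t C1 D1 x1 hPt hC1 hD1 hC1P hD1P);
          [intros z hz hzt; apply hcov; split; auto | intros z hz hw; apply gx1; auto | exact c1].
      * apply (dil_final P t D1 C1 x2 hPt hD1 hC1 hD1P hC1P);
          [intros z hz hzt; destruct (hcov z (conj hz hzt)); auto
          | intros z hz hw; apply gx2; auto | exact c2].
    + exists P', (fun z => z = t). split; [|split; [|split; [|split]]].
      * intros u w hu hw. apply NNPP. intro c. apply hno. exists u, w. split; auto. split; auto.
        split; intro d; apply c; auto.
      * intros u w -> ->. left; apply refl.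
      * intros z [h _]; auto.
      * intros z ->; auto.
      * intros z hz. destruct (classic (z = t)); [right; auto|left; split; auto].
Qed.

Lemma dil2 (P : L -> Prop) : no3 P ->
  exists C D, chain C /\ chain D /\ (forall z, C z -> P z) /\ (forall z, D z -> P z) /\
    (forall z, P z -> C z \/ D z).
Proof.
  destruct Lfin as [l hl]. intro h. apply (dil2_aux l hl (cnt l P) P); auto.
Qed.

End Lat.

Section Lat2.
Variables (L : Type) (le : L -> L -> Prop).
Hypothesis hL : slim_semimodular_lattice le.
Variables (top bot : L).
Hypotheses (htop : forall x, le x top) (hbot : forall x, le bot x).

Local Notation po := (Lpo L le hL).
Local Notation refl := (po_refl _ _ po).
Local Notation anti := (po_anti _ _ po).
Local Notation trans := (po_trans _ _ po).
Local Notation fin := (Lfin L le hL).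
Local Notation chain := (chain L le).
Local Notation phi := (phi L le).

Lemma path_up_aux l (hl : forall x, In x l) : forall N x (S : L -> Prop), cnt L l (le x) <= N ->
  (forall s, S s -> le x s) -> chain S ->
  exists k u, u 0 = x /\ u k = top /\ (forall a, a < k -> covers le (u a) (u (Datatypes.S a))) /\
    (forall s, S s -> exists a, a <= k /\ u a = s).
Proof.
  induction N as [|N IH]; intros x S hN hS hch.
  - exfalso. assert (cnt L l (fun _ => False) < cnt L l (le x)).
    { apply (cnt_lt L l _ _ x); [intros ? []|apply hl|apply refl|tauto]. }
    lia.
  - destruct (classic (x = top)) as [ext|nxt].
    + exists 0, (fun _ => x). split; auto. split; auto. split; [intros; lia|].
      intros s hs. exists 0. split; auto. apply anti; auto. rewrite ext; auto.
    + set (S' := fun z => (S z /\ z <> x) \/ z = top).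
      destruct (min_exists L le po fin S' top (or_intror eq_refl)) as [s0 [hs0 [_ hs0m]]].
      assert (xs0 : le x s0 /\ s0 <> x).
      { destruct hs0 as [[h1 h2]| ->]; auto. }
      destruct (min_exists L le po fin (fun z => le x z /\ z <> x /\ le z s0) s0
                  (conj (proj1 xs0) (conj (proj2 xs0) (refl _)))) as [y [[hy1 [hy2 hy3]] [_ hym]]].
      assert (cov : covers le x y).
      { split; [split; auto|]. intros z h1 h2. destruct (classic (z = x)) as [e|e]; [left; auto|right].
        apply hym; auto. split; auto. split; auto. apply trans with y; auto. }
      assert (S'ch : chain S').
      { intros a b [[ha _]| ->] [[hb _]| ->]; auto. }
      destruct (IH y (fun z => S z /\ z <> x)) as [k [u [u0 [uk [ucov uS]]]]].
      * assert (cnt L l (le y) < cnt L l (le x)); [|lia].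
        apply (cnt_lt L l _ _ x); [|apply hl|apply refl|].
        -- intros z hz. apply trans with y; auto.
        -- intro c. apply hy2. apply anti; auto.
      * intros s [hs hsx]. assert (hs' : S' s) by (left; auto).
        destruct (S'ch s s0 hs' hs0) as [c|c].
        -- rewrite (hs0m s hs' c). auto.
        -- apply trans with s0; auto.
      * intros a b [ha _] [hb _]. apply hch; auto.
      * exists (Datatypes.S k), (fun a => match a with 0 => x | Datatypes.S a' => u a' end).
        split; auto. split; auto. split.
        -- intros [|a] ha; [rewrite u0; auto|]. apply ucov. lia.
        -- intros s hs. destruct (classic (s = x)) as [e|e].
           ++ exists 0. split; [lia|auto].
           ++ destruct (uS s (conj hs e)) as [a [ha1 ha2]]. exists (Datatypes.S a). split; [lia|auto].
Qed.

Lemma path_up (S : L -> Prop) : chain S ->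
  exists k u, u 0 = bot /\ u k = top /\ (forall a, a < k -> covers le (u a) (u (Datatypes.S a))) /\
    (forall s, S s -> exists a, a <= k /\ u a = s).
Proof.
  intro hch. destruct fin as [l hl].
  apply (path_up_aux l hl (cnt L l (le bot)) bot S); auto.
Qed.

End Lat2.

Definition rep_ok (L : Type) (le : L -> L -> Prop) n (P : L -> nat -> Prop) (u v : nat -> L) :=
 (forall x y, le x y <-> forall k, k < n -> P x k -> P y k) /\
 (forall a b j, is_join le a b j -> forall k, P j k <-> P a k \/ P b k) /\
 (forall k, k < n -> ~ P (u 0) k /\ P (u n) k /\ ~ P (v 0) k /\ P (v n) k) /\
 (forall a, a < n -> exists t, t < n /\ ~ P (u a) t /\ P (u (S a)) t /\
     forall k, k < n -> (P (u (S a)) k <-> P (u a) k \/ k = t)) /\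
 (forall a, a < n -> exists t, t < n /\ ~ P (v a) t /\ P (v (S a)) t /\
     forall k, k < n -> (P (v (S a)) k <-> P (v a) k \/ k = t)) /\
 (forall x, exists a b, a <= n /\ b <= n /\ is_join le (u a) (v b) x).

Section Lat3.
Variables (L : Type) (le : L -> L -> Prop).
Hypothesis hL : slim_semimodular_lattice le.
Variables (top bot : L).
Hypotheses (htop : forall x, le x top) (hbot : forall x, le bot x).

Local Notation po := (Lpo L le hL).
Local Notation refl := (po_refl _ _ po).
Local Notation anti := (po_anti _ _ po).
Local Notation trans := (po_trans _ _ po).
Local Notation phi := (phi L le).

Section Ch.
Variables (k : nat) (w : nat -> L).
Hypotheses (hw0 : w 0 = bot) (hwk : w k = top) (hcov : forall a, a < k -> covers le (w a) (w (S a))).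

Definition labp a m := phi (w (S a)) m /\ ~ phi (w a) m /\
  forall m', phi (w (S a)) m' -> ~ phi (w a) m' -> m' = m.
Definition lab a := epsilon (inhabits bot) (labp a).

Lemma lab_spec a : a < k -> labp a (lab a).
Proof. intro ha. unfold lab. apply epsilon_spec. apply (phi_cover L le hL). auto. Qed.

Lemma w_mono a b : a <= b -> b <= k -> le (w a) (w b).
Proof.
  intros hab hb. induction hab as [|b hab IH]; [apply refl|].
  apply trans with (w b); [apply IH; lia|]. apply (hcov b ltac:(lia)).
Qed.

Lemma enum a m : a <= k -> phi (w a) m -> exists b, b < a /\ lab b = m.
Proof.
  induction a as [|a IH]; intros ha hp.
  - rewrite hw0 in hp. destruct hp as [_ c]. exfalso; auto.
  - destruct (classic (phi (w a) m)) as [c|c].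
    + destruct (IH ltac:(lia) c) as [b [? ?]]. exists b. split; [lia|auto].
    + exists a. split; [lia|]. symmetry. apply (lab_spec a ltac:(lia)); auto.
Qed.

Lemma phi_mono x y m : le x y -> phi x m -> phi y m.
Proof. intros h. apply (phi_le L le hL x y); auto. Qed.

Lemma lab_in a b : a < b -> b <= k -> phi (w b) (lab a).
Proof.
  intros hab hb. apply (phi_mono (w (S a))). apply w_mono; lia. apply lab_spec; lia.
Qed.

Lemma lab_inj a b : a < k -> b < k -> lab a = lab b -> a = b.
Proof.
  intros ha hb e. destruct (Nat.lt_total a b) as [h|[h|h]]; auto; exfalso.
  - apply (proj1 (proj2 (lab_spec b hb))). rewrite <- e. apply lab_in; lia.
  - apply (proj1 (proj2 (lab_spec a ha))). rewrite e. apply lab_in; lia.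
Qed.

Lemma lab_top a : a < k -> phi top (lab a).
Proof. intro ha. rewrite <- hwk. apply lab_in; lia. Qed.

Lemma top_enum m : phi top m -> exists b, b < k /\ lab b = m.
Proof. intro h. apply enum; auto. rewrite hwk; auto. Qed.

End Ch.

Lemma greatest (Q : nat -> Prop) n : Q 0 -> exists a, a <= n /\ Q a /\ forall a', a < a' -> a' <= n -> ~ Q a'.
Proof.
  intro h0. induction n as [|n IH].
  - exists 0. split; auto. split; auto. intros; lia.
  - destruct (classic (Q (S n))) as [c|c].
    + exists (S n). split; auto. split; auto. intros; lia.
    + destruct IH as [a [h1 [h2 h3]]]. exists a. split; [lia|]. split; auto.
      intros a' h4 h5. destruct (Nat.eq_dec a' (S n)) as [->|ne]; auto. apply h3; lia.
Qed.

Lemma lat_rep : exists n (P : L -> nat -> Prop) u v, rep_ok L le n P u v.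
Proof.
  assert (h3 : no3 L le (join_irreducible le)).
  { intros [a [b [c h]]]. apply (Lslim L le hL). exists a, b, c. tauto. }
  destruct (dil2 L le hL _ h3) as [C [D [hC [hD [_ [_ hCD]]]]]].
  destruct (path_up L le hL top bot htop hbot C hC) as [n [u [u0 [un [ucov uC]]]]].
  destruct (path_up L le hL top bot htop hbot D hD) as [n' [v [v0 [vn [vcov vD]]]]].
  set (mu := lab u). set (nu := lab v).
  assert (eqn : n = n').
  { assert (A : forall (k1 k2 : nat) (w1 w2 : nat -> L), w1 0 = bot -> w1 k1 = top ->
       (forall a, a < k1 -> covers le (w1 a) (w1 (S a))) ->
       w2 0 = bot -> w2 k2 = top -> (forall a, a < k2 -> covers le (w2 a) (w2 (S a))) -> k1 <= k2).
    { intros k1 k2 w1 w2 a1 a2 a3 b1 b2 b3.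
      rewrite <- (length_seq k1 0), <- (length_map (lab w1)), <- (length_seq k2 0),
        <- (length_map (lab w2)).
      apply NoDup_incl_length.
      - apply NoDup_map_NoDup_ForallPairs; [|apply seq_NoDup].
        intros a b ha hb e. apply in_seq in ha. apply in_seq in hb.
        apply (lab_inj k1 w1 a3); auto; lia.
      - intros m hm. apply in_map_iff in hm. destruct hm as [a [<- ha]]. apply in_seq in ha.
        destruct (top_enum k2 w2 b1 b2 b3 (lab w1 a)) as [b [hb e]].
        + apply (lab_top k1 w1 a2 a3); lia.
        + apply in_map_iff. exists b. split; auto. apply in_seq; lia. }
    apply Nat.le_antisymm; [apply (A n n' u v) | apply (A n' n v u)]; auto. }
  subst n'.
  exists n, (fun x k => phi x (mu k)), u, v.
  split; [|split; [|split; [|split; [|split]]]].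
  - intros x y. rewrite (phi_le L le hL). split.
    + intros h k hk. apply h.
    + intros h m hm. assert (hmt : phi top m).
      { apply (phi_mono x top); auto. }
      destruct (top_enum n u u0 un ucov m hmt) as [k [hk <-]]. apply h; auto.
  - intros a b j hj k. apply (phi_join L le hL); auto.
  - intros k hk. split; [|split; [|split]].
    + rewrite u0. intros [_ c]. auto.
    + rewrite un. apply (lab_top n u un ucov); auto.
    + rewrite v0. intros [_ c]. auto.
    + rewrite vn. apply (lab_top n u un ucov); auto.
  - intros a ha. exists a. destruct (lab_spec n u ucov a ha) as [s1 [s2 s3]].
    split; auto. split; auto. split; auto. intros k hk. split.
    + intro h. destruct (classic (phi (u a) (mu k))) as [c|c]; [left; auto|right].
      apply (lab_inj n u ucov); auto.
    + intros [h| ->]; auto. apply (phi_mono (u a)); auto. apply ucov; auto.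
  - intros a ha. destruct (lab_spec n v vcov a ha) as [s1 [s2 s3]].
    destruct (top_enum n u u0 un ucov (nu a)) as [t [ht et]].
    { apply (lab_top n v vn vcov); auto. }
    exists t. split; auto. unfold mu. rewrite et. split; auto. split; auto.
    intros k hk. split.
    + intro h. destruct (classic (phi (v a) (lab u k))) as [c|c]; [left; auto|right].
      apply (lab_inj n u ucov); auto. rewrite et. apply s3; auto.
    + intros [h| ->]; auto.
      * apply (phi_mono (v a)); auto. apply vcov; auto.
      * rewrite et; auto.
  - intro x.
    destruct (greatest (fun a => le (u a) x) n) as [a [ha [hax hamax]]]; [rewrite u0; auto|].
    destruct (greatest (fun a => le (v a) x) n) as [b [hb [hbx hbmax]]]; [rewrite v0; auto|].
    exists a, b. split; auto. split; auto.
    destruct (Ljoin L le hL (u a) (v b)) as [j hj].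
    assert (e : j = x).
    { apply anti.
      - apply hj; auto.
      - apply NNPP. intro c. destruct (ji_below L le hL x j c) as [z [hz [hzx hzj]]].
        apply hzj. destruct (hCD z hz) as [hc|hd].
        + destruct (uC z hc) as [a' [ha' <-]]. apply trans with (u a); [|apply hj].
          destruct (Nat.le_gt_cases a' a) as [h|h]. apply (w_mono n u ucov); auto.
          exfalso. apply (hamax a'); auto.
        + destruct (vD z hd) as [b' [hb' <-]]. apply trans with (v b); [|apply hj].
          destruct (Nat.le_gt_cases b' b) as [h|h]. apply (w_mono n v vcov); auto.
          exfalso. apply (hbmax b'); auto. }
    subst j. auto.
Qed.

End Lat3.

From mathcomp Require Import ssreflect ssrfun ssrbool eqtype ssrnat div prime fintype bigop seq zmodp.

Section Arith.
Variables (n : nat) (p : nat -> nat).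
Hypotheses (hp : forall k, prime (p k)) (hinj : forall k l, p k = p l -> k = l).

Definition NN := \prod_(0 <= i < n) p i.
Definition eprd k := \prod_(0 <= i < n | i != k) p i.

Lemma pndvd_prod (r : seq nat) (P : pred nat) m :
  (forall i, i \in r -> P i -> i != m) -> ~~ (p m %| \prod_(i <- r | P i) p i).
Proof.
  elim: r => [|a r IH] h.
  - rewrite big_nil dvdn1. apply/eqP => e. move: (prime_gt1 (hp m)). by rewrite e.
  - rewrite big_cons. case hPa: (P a).
    + rewrite Euclid_dvdM //. apply/norP; split.
      * rewrite dvdn_prime2 //. apply/eqP => e. move: (h a (mem_head _ _) hPa).
        by rewrite (hinj _ _ e) eqxx.
      * apply: IH => i hi. apply: h. by rewrite in_cons hi orbT.
    + apply: IH => i hi. apply: h. by rewrite in_cons hi orbT.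
Qed.

Lemma NN_gt0 : 0 < NN.
Proof. rewrite /NN. apply: prodn_gt0 => i. exact: prime_gt0. Qed.

Lemma NN_split k : k < n -> NN = p k * eprd k.
Proof.
  move=> hk. rewrite /NN /eprd. apply: bigD1_seq.
  - by rewrite mem_index_iota.
  - exact: iota_uniq.
Qed.

Lemma pdvd_NN k : k < n -> p k %| NN.
Proof. move=> hk. rewrite (NN_split k hk). exact: dvdn_mulr. Qed.

Lemma pdvd_ee l k : l < n -> l != k -> p l %| eprd k.
Proof.
  move=> hl hlk. rewrite /eprd -big_filter. rewrite (bigD1_seq l).
  - exact: dvdn_mulr.
  - by rewrite mem_filter hlk mem_index_iota.
  - apply: filter_uniq. exact: iota_uniq.
Qed.

Lemma pndvd_ee k : ~~ (p k %| eprd k).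
Proof. apply: pndvd_prod => i _ h. exact: h. Qed.

Lemma ee_lt k : k < n -> eprd k < NN.
Proof.
  move=> hk. rewrite (NN_split k hk).
  have h0 : 0 < eprd k. { rewrite /eprd. apply: prodn_gt0 => i. exact: prime_gt0. }
  rewrite -{1}(mul1n (eprd k)) ltn_pmul2r //. exact: prime_gt1.
Qed.

Lemma NN_dvd x : (forall k, k < n -> p k %| x) -> NN %| x.
Proof.
  move=> h. rewrite /NN.
  have : forall m, m <= n -> \prod_(0 <= i < m) p i %| x.
  { elim => [|m IH] hm.
    - by rewrite big_nil dvd1n.
    - rewrite big_nat_recr //= Gauss_dvd.
      + rewrite IH ?h //. exact: ltnW.
      + rewrite coprime_sym prime_coprime //. apply: pndvd_prod => i.
        rewrite mem_index_iota => /andP [_ hi] _. by rewrite neq_ltn hi. }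
  by apply.
Qed.

End Arith.

Section Grp.
Variables (n : nat) (p : nat -> nat).
Hypotheses (hp : forall k, prime (p k)) (hinj : forall k l, p k = p l -> k = l).

Local Notation N := (NN n p).
Definition Np := N.-1.
Lemma Np_eq : Np.+1 = N.
Proof. rewrite /Np prednK //. exact: NN_gt0. Qed.

Definition ZG : group := @Group 'I_Np.+1 (@Zp_add Np.+1) (@Zp0 Np) (@Zp_opp Np.+1) (@Zp_addA Np.+1) (@Zp_add0z Np) (@Zp_addNz Np).

Lemma val_mul (x y : ZG) : val (gmul ZG x y) = (val x + val y) %% N.
Proof. by rewrite /= -[in RHS]Np_eq. Qed.

Lemma val_one : val (gone ZG) = 0.
Proof. by []. Qed.

Lemma val_inv (x : ZG) : val (ginv ZG x) = (N - val x) %% N.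
Proof. by rewrite /= -[in RHS]Np_eq. Qed.

Lemma val_lt (x : ZG) : val x < N.
Proof. rewrite -Np_eq. exact: ltn_ord. Qed.

Lemma dvd_modN k d : k < n -> (p k %| d %% N) = (p k %| d).
Proof. move=> hk. rewrite /dvdn modn_dvdm //. exact: (@pdvd_NN n p). Qed.

Lemma val_gpow (g : ZG) c : val (gpow g c) = (val g * c) %% N.
Proof.
  elim: c => [|c IH] /=.
  - by rewrite muln0 mod0n.
  - rewrite -[in RHS]Np_eq. rewrite -[in RHS]Np_eq in IH. by rewrite IH modnDmr mulnS.
Qed.

Definition sub (S : nat -> Prop) : ZG -> Prop :=
  fun x => forall k, (k < n)%coq_nat -> ~ S k -> p k %| val x.

Lemma sub_sg S : subgroup (sub S).
Proof.
  split; [|split].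
  - move=> k _ _. by rewrite val_one dvdn0.
  - move=> x y hx hy k hk hS. rewrite val_mul dvd_modN; last by apply/ltP.
    apply: dvdn_add; [exact: hx | exact: hy].
  - move=> x hx k hk hS. rewrite val_inv dvd_modN; last by apply/ltP.
    apply: dvdn_sub; [apply: (@pdvd_NN n p); by apply/ltP | exact: hx].
Qed.

Lemma sub_zero (x : ZG) : sub (fun _ => False) x -> x = gone ZG.
Proof.
  move=> h. apply: val_inj. rewrite val_one.
  have hd : N %| val x.
  { apply: (@NN_dvd n p hp hinj) => k hk. apply: h; [by apply/ltP | by []]. }
  case hx: (val x) => [//|v]. exfalso.
  have := dvdn_leq _ hd. rewrite hx => /(_ isT) hle.
  have := val_lt x. rewrite hx. by rewrite ltnNge hle.
Qed.

Lemma sub_wit k : k < n -> exists x : ZG, val x = eprd n p k.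
Proof.
  move=> hk. exists (inZp (eprd n p k) : 'I_Np.+1). by rewrite /= modn_small // Np_eq (@ee_lt n p hp).
Qed.

Lemma sub_refl S S' : (forall x, sub S x -> sub S' x) ->
  forall k, (k < n)%coq_nat -> S k -> S' k.
Proof.
  move=> h k hk hS. apply: NNPP => hS'.
  have hk' : k < n by apply/ltP.
  case: (sub_wit k hk') => x hx.
  have : sub S' x.
  { apply: h => l hl hSl. rewrite hx. apply: (@pdvd_ee n p); first by apply/ltP.
    apply/eqP => e. by subst l. }
  move=> /(_ k hk hS'). rewrite hx. by move: (@pndvd_ee n p hp hinj k) => /negP.
Qed.


Lemma gpow_in (A : ZG -> Prop) (g : ZG) c : subgroup A -> A g -> A (gpow g c).
Proof.
  move=> hA hg. elim: c => [|c IH] /=; first exact: (sg1 ZG A hA).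
  exact: (sgM ZG A hA).
Qed.

Lemma sub_step S S' t : (t < n)%coq_nat -> ~ S t -> S' t ->
  (forall k, (k < n)%coq_nat -> (S' k <-> S k \/ k = t)) ->
  Defs.subset (sub S) (sub S') /\ normal_in (sub S) (sub S') /\ simple_quotient (sub S') (sub S).
Proof.
  move=> ht hSt hS't hiff.
  have ht' : t < n by apply/ltP.
  have sub12 : Defs.subset (sub S) (sub S').
  { move=> x hx k hk hk'. apply: hx => // hk2. apply: hk'. apply/hiff => //. by left. }
  split; first exact: sub12.
  split.
  { move=> x y _ hx. have -> : gmul ZG (ginv ZG y) (gmul ZG x y) = x.
    { rewrite /= (@Zp_addC _ x y) Zp_addA Zp_addNz. exact: Zp_add0z. }
    exact: hx. }
  split.
  { case: (sub_wit t ht') => x hx. exists x. split.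
    - move=> k hk hk'. rewrite hx. apply: (@pdvd_ee n p); first by apply/ltP.
      apply/eqP => e. subst k. by apply: hk'.
    - move=> c. move: (c t ht hSt). rewrite hx. by move: (@pndvd_ee n p hp hinj t) => /negP. }
  move=> Nsub hN hSN hNS' _.
  case: (classic (forall y, Nsub y -> sub S y)) => [hall|hex].
  { left. move=> x; split; [exact: hall | exact: hSN]. }
  right. move=> z; split; first exact: hNS'.
  move=> hz.
  have [y [hNy hSy]] : exists y, Nsub y /\ ~ sub S y.
  { apply: NNPP => c. apply: hex => y hy. apply: NNPP => d. apply: c. by exists y. }
  have hyS' := hNS' y hNy.
  have hpy : ~~ (p t %| val y).
  { apply/negP => hd. apply: hSy => k hk hSk.
    case: (classic (k = t)) => [->|ne]; first exact: hd.
    apply: hyS' => // c. case: (proj1 (hiff k hk) c) => //. }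
  have hy0 : 0 < val y.
  { case e: (val y) => [|v] //. move: hpy. by rewrite e dvdn0. }
  have hcop : gcdn (val y) (p t) = 1.
  { apply/eqP. change (coprime (val y) (p t)). by rewrite coprime_sym prime_coprime. }
  have [km [kn hkm]] : exists km kn, km * val y = kn * p t + 1.
  { case: (egcdnP (p t) hy0) => km kn h _. exists km, kn. by rewrite h hcop. }
  set c := km * val z.
  set gy := gpow y c.
  have hNgy : Nsub gy by apply: gpow_in.
  set w := gmul ZG z (ginv ZG gy).
  have ez : gmul ZG w gy = z by rewrite /w g_mulVKr.
  have hSw : sub S w.
  { move=> k hk hSk. have hk' : k < n by apply/ltP.
    set q := p k.
    have hqN : q %| N by apply: (@pdvd_NN n p).
    have e1 : (val w + val gy) %% q = val z %% q.
    { rewrite -[in RHS]ez val_mul. by rewrite (modn_dvdm _ hqN). }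
    have e2 : val gy %% q = val z %% q.
    { rewrite /gy val_gpow (modn_dvdm _ hqN).
      case: (classic (k = t)) => [ekt|nkt].
      - have -> : val y * c = (kn * val z) * q + val z.
        { rewrite /c /q ekt mulnCA mulnA hkm mulnDl mul1n. by rewrite mulnAC. }
        by rewrite modnMDl.
      - have nS'k : ~ S' k by move=> /(hiff k hk) [|] //.
        have dz : q %| val z := hz k hk nS'k.
        have dy : q %| val y := hyS' k hk nS'k.
        have dyc : q %| val y * c by apply: dvdn_mulr.
        move: dyc dz. rewrite /dvdn => /eqP -> /eqP ->. by []. }
    have e3 : (val w + val gy) %% q = (0 + val gy) %% q by rewrite e1 add0n e2.
    have := eqn_modDr (val gy) (val w) 0 q. rewrite e3 eqxx mod0n => /esym /eqP hw.
    by rewrite /dvdn hw. }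
  rewrite -ez. apply: (sgM ZG Nsub hN); [exact: hSN | exact: hNgy].
Qed.

End Grp.

Fixpoint pr k := match k with 0 => 2 | S k => sval (prime_above (pr k)) end.

Lemma pr_prime k : prime (pr k).
Proof. case: k => [|k] //=. by case: (prime_above (pr k)). Qed.

Lemma pr_lt k : pr k < pr k.+1.
Proof. rewrite /=. by case: (prime_above (pr k)). Qed.

Lemma pr_mono k l : k < l -> pr k < pr l.
Proof.
  elim: l => [//|l IH]. rewrite ltnS leq_eqVlt => /orP [/eqP ->|h]; first exact: pr_lt.
  exact: (ltn_trans (IH h) (pr_lt l)).
Qed.

Lemma pr_inj k l : pr k = pr l -> k = l.
Proof.
  move=> e. case: (ltngtP k l) => // h; move: (pr_mono _ _ h); by rewrite e ltnn.
Qed.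

Section Main1.
Variables (L : Type) (le : L -> L -> Prop) (n : nat) (P : L -> nat -> Prop) (u v : nat -> L).
Hypothesis hpo : partial_order le.
Hypothesis hrep : rep_ok L le n P u v.

Local Notation G := (ZG n pr).
Local Notation sb := (sub n pr).
Definition T x k := ~ P x k.

Lemma cs_from (w : nat -> L) :
  (forall k, (k < n)%coq_nat -> ~ P (w 0) k /\ P (w n) k) ->
  (forall a, (a < n)%coq_nat -> exists t, (t < n)%coq_nat /\ ~ P (w a) t /\ P (w a.+1) t /\
     forall k, (k < n)%coq_nat -> (P (w a.+1) k <-> P (w a) k \/ k = t)) ->
  composition_series n (fun i => sb (T (w (n - i)))).
Proof.
  move=> hends hstep. split; [|split; [|split]].
  - move=> x. rewrite subn0. split.
    + move=> hx. apply: (@sub_zero n pr pr_prime pr_inj) => k hk _. apply: hx => // c. apply: c.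
      by apply (hends k hk).
    + move=> -> k _ _. by rewrite val_one dvdn0.
  - move=> x. rewrite subnn. move=> k hk hT. exfalso. apply: hT. by apply (hends k hk).
  - move=> i _. exact: (sub_sg n pr pr_prime).
  - move=> i hi. have hi' : i < n by apply/ltP.
    set a := n - i.+1.
    have ha : (a < n)%coq_nat by apply/ltP; rewrite /a; rewrite ltn_subLR ?addSn ?ltnS ?leq_addl //.
    have ea : n - i = a.+1 by rewrite /a subnSK.
    rewrite ea.
    case: (hstep a ha) => t [ht [h1 [h2 h3]]].
    apply: (@sub_step n pr pr_prime pr_inj _ _ t ht).
    + move=> c. exact: (c h2).
    + exact: h1.
    + move=> k hk. rewrite /T. split.
      * move=> c. destruct (classic (k = t)) as [e|ne]; [by right|left].
        move=> d. apply: c. destruct (proj1 (h3 k hk) d) as [e|e]; [exact e| exfalso; exact (ne e)].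
      * move=> [c|e] d; last by subst k; apply: h1.
        apply: c. exact: (proj2 (h3 k hk) (or_introl d)).
Qed.


Definition HH i := sb (T (u (n - i))).
Definition KK j := sb (T (v (n - j))).

Lemma csH : composition_series n HH.
Proof.
  destruct hrep as [_ [_ [h3 [h4 _]]]]. apply: cs_from.
  - move=> k hk. case: (h3 k hk) => [? [? _]]. by split.
  - exact: h4.
Qed.

Lemma csK : composition_series n KK.
Proof.
  destruct hrep as [_ [_ [h3 [_ [h5 _]]]]]. apply: cs_from.
  - move=> k hk. case: (h3 k hk) => [_ [_ [? ?]]]. by split.
  - exact: h5.
Qed.

Lemma sub_join a b x : is_join le a b x -> forall g, sb (T x) g <-> sb (T a) g /\ sb (T b) g.
Proof.
  move=> hj g. destruct hrep as [_ [h2 _]]. rewrite /sub /T. split.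
  - move=> h. split => k hk hn; apply: h => // c; apply: hn => d; apply: c;
      apply/(h2 _ _ _ hj k); by [left|right].
  - move=> [ha hb] k hk hn. have px : P x k by apply: NNPP.
    case: (proj1 (h2 _ _ _ hj k) px) => [pa|pb].
    + apply: (ha k hk). move=> c. exact: (c pa).
    + apply: (hb k hk). move=> c. exact: (c pb).
Qed.

Lemma sub_le x y : le x y <-> (forall g, sb (T y) g -> sb (T x) g).
Proof.
  destruct hrep as [h1 _]. rewrite h1. split.
  - move=> h g hg k hk hn. apply: hg => // c. apply: hn => d. apply: c. exact: h.
  - move=> h k hk pk. have := @sub_refl n pr pr_prime pr_inj _ _ h k hk.
    rewrite /T. move=> hh. apply: NNPP => c. exact: (hh c pk).
Qed.

Lemma fin_G : finite_type G.
Proof.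
  exists (List.map (fun i => (inZp i : 'I_(Np n pr).+1)) (List.seq 0 (Np n pr).+1)).
  move=> x. apply/List.in_map_iff. exists (val x). split; first exact: valZpK.
  apply/List.in_seq. split; first exact: le_0_n. apply/ltP. exact: ltn_ord.
Qed.

Lemma cyc_G : cyclic_group G.
Proof.
  exists (inZp 1 : 'I_(Np n pr).+1). move=> x. exists (val x). left.
  apply: val_inj. rewrite val_gpow /=.
  have e1 : 1 %% (Np n pr).+1 = 1 %% NN n pr by rewrite (@Np_eq n pr pr_prime).
  rewrite e1.
  rewrite modnMml mul1n modn_small //. exact: (@val_lt n pr pr_prime x). exact: pr_prime.
Qed.


Hypothesis hjoin : forall x y, exists j, is_join le x y j.

Lemma sb_join_eq a b x : is_join le a b x -> sb (T x) = (fun g => sb (T a) g /\ sb (T b) g).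
Proof.
  move=> hj. apply: functional_extensionality => g. apply: propositional_extensionality.
  exact: sub_join.
Qed.

Lemma fx_ok x : exists i j, (i <= n)%coq_nat /\ (j <= n)%coq_nat /\
  sb (T x) = (fun g => HH i g /\ KK j g).
Proof.
  destruct hrep as [_ [_ [_ [_ [_ h6]]]]].
  case: (h6 x) => a [b [ha [hb hj]]].
  exists (n - a), (n - b). split; first by apply/leP; exact: leq_subr.
  split; first by apply/leP; exact: leq_subr.
  rewrite /HH /KK !subKn; try by apply/leP.
  exact: sb_join_eq.
Qed.

Definition fmap x : CSL n HH KK := exist _ (sb (T x)) (fx_ok x).

Lemma gex (A : CSL n HH KK) : exists x, proj1_sig A = sb (T x).
Proof.
  destruct A as [a [i [j [hi [hj ->]]]]]. simpl.
  case: (hjoin (u (n - i)) (v (n - j))) => x hx. exists x.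
  rewrite (sb_join_eq _ _ _ hx). by [].
Qed.

Definition gmap (A : CSL n HH KK) : L := epsilon (inhabits (u 0)) (fun x => proj1_sig A = sb (T x)).

Lemma gmap_spec A : proj1_sig A = sb (T (gmap A)).
Proof. rewrite /gmap. exact: (epsilon_spec (inhabits (u 0)) _ (gex A)). Qed.

Lemma iso1 : order_isomorphic le (@CSL_dual_le G n HH KK).
Proof.
  exists fmap, gmap. split; [|split].
  - move=> x. have e := gmap_spec (fmap x). simpl in e.
    apply: (po_anti _ _ hpo); apply/sub_le; rewrite -e; by [].
  - move=> A. destruct A as [a pa]. have e := gmap_spec (exist _ a pa). simpl in e.
    rewrite /fmap. move: (fx_ok (gmap (exist _ a pa))). rewrite -e => pf.
    by rewrite (proof_irrelevance _ pf pa).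
  - move=> x1 x2. rewrite /CSL_dual_le /=. exact: sub_le.
Qed.

End Main1.

Theorem part1 : forall (L : Type) (leL : L -> L -> Prop),
     slim_semimodular_lattice leL ->
     exists (G : group) (n : nat) (H K : nat -> G -> Prop),
       finite_type G /\ cyclic_group G /\
       composition_series n H /\ composition_series n K /\
       order_isomorphic leL (@CSL_dual_le G n H K).
Proof.
  move=> L le hL.
  case: (top_ex L le hL) => top htop. case: (bot_ex L le hL) => bot hbot.
  case: (lat_rep L le hL top bot htop hbot) => n [P [u [v hrep]]].
  exists (ZG n pr), n, (HH L n P u), (KK L n P v).
  split; first exact: fin_G.
  split; first exact: cyc_G.
  split; first exact: (csH L le n P u v hrep).
  split; first exact: (csK L le n P u v hrep).
  exact: (iso1 L le n P u v (Lpo L le hL) hrep (Ljoin L le hL)).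
Qed.


Theorem corollary3p5 :
  (forall (L : Type) (leL : L -> L -> Prop),
     slim_semimodular_lattice leL ->
     exists (G : group) (n : nat) (H K : nat -> G -> Prop),
       finite_type G /\ cyclic_group G /\
       composition_series n H /\ composition_series n K /\
       order_isomorphic leL (@CSL_dual_le G n H K))
  /\
  (forall (G : group) (n : nat) (H K : nat -> G -> Prop),
     composition_series n H -> composition_series n K ->
     slim_semimodular_lattice (@CSL_dual_le G n H K)).
Proof.
  split.
  - exact: part1.
  - move=> G n H K hH hK. exact: (csl_ssl G n H K hH hK).
Qed.
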